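(* Let $G$ be a group with a conjugation-closed generating set $X$, let $g\in\mathrm{Mon}(X)$ and $n=\ell(g)$. The maps $L\colon\mathrm{Fact}(G,g,\mathbf I)\to\mathrm{Comp}(\mathbb Z,n,\mathbf I)$ and $\overline L\colon\mathrm{Fact}(G,g,\mathbf S)\to\mathrm{Comp}(\mathbb Z,n,\mathbf S)$ are surjective order-preserving maps, and $\overline L\circ q=q\circ L$.
   Context: $\mathrm{Mon}(X)$ is the generated submonoid; $\ell(x)$ is the minimal length of a product of elements of $X$ equal to $x$. A linear factorization of $g$ is a row vector $[x_L\ x_1\ \cdots\ x_k\ x_R]$ ($k\ge0$) of elements of $\mathrm{Mon}(X)$ with $x_1,\dots,x_k\ne1$, $\ell(x_L)+\sum_i\ell(x_i)+\ell(x_R)=\ell(g)$ and $x_Lx_1\cdots x_kx_R=g$. With $x_0=x_L$, $x_{k+1}=x_R$, the merge at position $i\in\{0,\dots,k\}$ replaces $x_i,x_{i+1}$ by the single entry $x_ix_{i+1}$. $\mathrm{Fact}(G,g,\mathbf I)$ is the set of linear factorizations ordered by $\mathbf x\le\mathbf y$ iff $\mathbf x$ is obtained from $\mathbf y$ by merges. Two linear factorizations $[x_L\ x_1\cdots x_k\ x_R]$ and $[y_L\ y_1\cdots y_k\ y_R]$ of the same length are equivalent iff $x_i=y_i$ for $1\le i\le k$; the classes are circular factorizations, $\mathrm{Fact}(G,g,\mathbf S)$ is the set of classes with $\bar{\mathbf x}\le\bar{\mathbf y}$ iff $\mathbf x'\le\mathbf y'$ for some representatives, and $q$ is the quotient map.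 Each class has a unique representative with last entry $1$, namely $[gx_Rg^{-1}x_L\ x_1\cdots x_k\ 1]$. For $G=\mathbb Z$, $X=\{1\}$ (additive notation) these are linear compositions $\mathrm{Comp}(\mathbb Z,n,\mathbf I)$ and circular compositions $\mathrm{Comp}(\mathbb Z,n,\mathbf S)$, with quotient map also denoted $q$. $L([x_L\ x_1\cdots x_k\ x_R])=[\ell(x_L)\ \ell(x_1)\cdots\ell(x_k)\ \ell(x_R)]$, and $\overline L$ sends the class with representative $[x_L\ x_1\cdots x_k\ 1]$ to the class of $[\ell(x_L)\ \ell(x_1)\cdots\ell(x_k)\ 0]$. *)

(* Defs.v *)
From mathcomp Require Import all_boot all_algebra.
From Stdlib Require Import ClassicalEpsilon Relation_Operators.
Set Implicit Arguments. Unset Strict Implicit. Unset Printing Implicit Defensive.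
Import GRing.Theory.

Record group := Group {
  gT :> Type;
  gmul : gT -> gT -> gT;
  gone : gT;
  ginv : gT -> gT;
  gmulA : forall x y z, gmul x (gmul y z) = gmul (gmul x y) z;
  gmul1 : forall x, gmul gone x = x;
  gmulV : forall x, gmul (ginv x) x = gone }.

Section Defs.
Variable G : group.
Local Notation "x * y" := (gmul x y).
Local Notation one := (gone G).

Definition gprod (s : seq G) : G := foldr (@gmul G) one s.

Definition conj_closed (X : G -> Prop) :=
  forall x y, X x -> X (ginv y * (x * y)).

Definition generates (X : G -> Prop) :=
  forall y : G, exists s : seq (G * bool),
    (forall p, List.In p s -> X p.1) /\
    gprod (map (fun p => if p.2 then ginv p.1 else p.1) s) = y.

Definition Mon (X : G -> Prop) (x : G) :=
  exists s : seq G, (forall y, List.In y s -> X y) /\ gprod s = x.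

Definition is_len (X : G -> Prop) (x : G) (n : nat) :=
  (exists s : seq G, (forall y, List.In y s -> X y) /\ gprod s = x /\ size s = n) /\
  (forall s : seq G, (forall y, List.In y s -> X y) -> gprod s = x -> n <= size s).

(* ell(x): the word length of x (meaningful for x in Mon(X)) *)
Definition ell (X : G -> Prop) (x : G) : nat :=
  epsilon (inhabits 0%N) (is_len X x).

(* A linear factorization [x_L x_1 ... x_k x_R] is a list of size k+2. *)
Definition LinFact (X : G -> Prop) (g : G) (s : seq G) :=
  [/\ 2 <= size s,
      (forall y, List.In y s -> Mon X y),
      (forall i, 0 < i < (size s).-1 -> nth one s i <> one),
      sumn (map (ell X) s) = ell X g
    & gprod s = g].

Definition merge (i : nat) (s : seq G) : seq G :=
  take i s ++ (nth one s i * nth one s i.+1) :: drop i.+2 s.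

Definition merge_step (s t : seq G) :=
  exists i, i.+1 < size t /\ s = merge i t.

Definition fact_le (s t : seq G) := clos_refl_trans _ merge_step s t.

Definition circ_equiv (s t : seq G) :=
  size s = size t /\ (forall i, 0 < i < (size s).-1 -> nth one s i = nth one t i).

Definition qmap (X : G -> Prop) (g : G) (s : seq G) : seq G -> Prop :=
  fun t => LinFact X g t /\ circ_equiv s t.

(* circular factorizations = classes *)
Definition CircFact (X : G -> Prop) (g : G) (C : seq G -> Prop) :=
  exists s, LinFact X g s /\ C = qmap X g s.

Definition circ_le (C D : seq G -> Prop) :=
  exists s t, C s /\ D t /\ fact_le s t.

End Defs.

Definition Zgroup : group :=
  @Group int (fun a b => a + b)%R 0%R (fun a => - a)%R
    (fun x y z => addrA x y z) (fun x => add0r x) (fun x => addNr x).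

Definition Zgen (a : Zgroup) : Prop := a = 1%R.

(* Comp(Z,n,I) and Comp(Z,n,S) are Fact(Z,n,I) and Fact(Z,n,S) for X = {1}. *)
Definition Comp_I (n : nat) (c : seq Zgroup) := LinFact Zgen ((Posz n) : Zgroup) c.
Definition Comp_S (n : nat) (C : seq Zgroup -> Prop) :=
  CircFact Zgen ((Posz n) : Zgroup) C.

Definition Lmap (G : group) (X : G -> Prop) (s : seq G) : seq Zgroup :=
  map (fun x => ((Posz (ell X x)) : Zgroup)) s.

Definition Lbar (G : group) (X : G -> Prop) (g : G) (C : seq G -> Prop)
  : seq Zgroup -> Prop :=
  fun t => exists s, C s /\ last (gone G) s = gone G /\
           qmap Zgen ((Posz (ell X g)) : Zgroup) (Lmap X s) t.

(* Main.v *)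
Require Import Defs.
From mathcomp Require Import all_boot all_algebra.
From mathcomp Require Import zify.
From Stdlib Require Import Lia ClassicalEpsilon Classical Relation_Operators FunctionalExtensionality PropExtensionality.
Set Implicit Arguments. Unset Strict Implicit. Unset Printing Implicit Defensive.

Notation "x ** y" := (gmul x y) (at level 40, left associativity).

Lemma gmulV_r (G : group) (x : G) : x ** ginv x = gone G.
Proof.
have ee : (x ** ginv x) ** (x ** ginv x) = x ** ginv x.
  by rewrite -gmulA (gmulA (ginv x)) gmulV gmul1.
have := congr1 (gmul (ginv (x ** ginv x))) ee.
by rewrite gmulA !gmulV gmul1 => ->.
Qed.

Lemma gmul1_r (G : group) (x : G) : x ** gone G = x.
Proof. by rewrite -(gmulV x) gmulA gmulV_r gmul1. Qed.

Lemma gmulK (G : group) (x y : G) : ginv x ** (x ** y) = y.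
Proof. by rewrite gmulA gmulV gmul1. Qed.

Lemma gmulVK (G : group) (x y : G) : x ** (ginv x ** y) = y.
Proof. by rewrite gmulA gmulV_r gmul1. Qed.

Lemma gcancel (G : group) (a b c : G) : a ** b = a ** c -> b = c.
Proof. by move=> /(congr1 (gmul (ginv a))); rewrite !gmulK. Qed.

Lemma gswap (G : group) (x y : G) : x ** y = gone G -> y ** x = gone G.
Proof.
move=> h; have : y = ginv x by apply: (@gcancel _ x); rewrite h gmulV_r.
by move=> ->; rewrite gmulV.
Qed.

Lemma ginvK (G : group) (x : G) : ginv (ginv x) = x.
Proof. by rewrite -(gmul1_r (ginv (ginv x))) -(gmulV x) gmulA gmulV gmul1. Qed.

Lemma gprod_cat (G : group) (s t : seq G) : gprod (s ++ t) = gprod s ** gprod t.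
Proof. by elim: s => [|x s IH] /=; rewrite ?gmul1 // IH gmulA. Qed.

Lemma gprod_flatten (G : group) (ss : seq (seq G)) :
  gprod (flatten ss) = gprod (map (@gprod G) ss).
Proof. by elim: ss => [|s ss IH] //=; rewrite gprod_cat IH. Qed.

Lemma In_map A B (f : A -> B) y s : List.In y (map f s) -> exists x, List.In x s /\ y = f x.
Proof.
elim: s => [|x s IH] //= [<-|/IH [z [h ->]]]; first by exists x; auto.
by exists z; auto.
Qed.

Lemma In_mapI A B (f : A -> B) x s : List.In x s -> List.In (f x) (map f s).
Proof. elim: s => [|z s IH] //= [->|/IH]; auto. Qed.

Lemma In_cat A (y : A) s t : List.In y (s ++ t) <-> List.In y s \/ List.In y t.
Proof. elim: s => [|x s IH] /=; first tauto. rewrite IH; tauto. Qed.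

Lemma In_flatten A (y : A) p ss : List.In y p -> List.In p ss -> List.In y (flatten ss).
Proof.
elim: ss => [|q ss IH] //= hy [e|h]; apply In_cat; [left; congruence|auto].
Qed.

Lemma In_nth A (x0 : A) s i : i < size s -> List.In (nth x0 s i) s.
Proof. elim: s i => [|x s IH] [|i] //= h; auto. Qed.

Lemma In_take A (y : A) n s : List.In y (take n s) -> List.In y s.
Proof. elim: s n => [|x s IH] [|n] //= [->|/IH]; auto. Qed.
Lemma In_drop A (y : A) n s : List.In y (drop n s) -> List.In y s.
Proof. elim: s n => [|x s IH] [|n] //= h; right; exact: IH h. Qed.

Lemma min_ex (P : nat -> Prop) n : P n -> exists m, P m /\ forall k, P k -> m <= k.
Proof.
elim/ltn_ind: n => n IH Pn.
case: (classic (exists k, k < n /\ P k)) => [[k [hk Pk]]|hno].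
  exact: (IH k).
exists n; split=> // k Pk; rewrite leqNgt; apply/negP => hk; apply: hno; eauto.
Qed.

Lemma is_len_uniq (G : group) (X : G -> Prop) x n m : is_len X x n -> is_len X x m -> n = m.
Proof.
move=> [[w1 [h1 [e1 s1]]] H1] [[w2 [h2 [e2 s2]]] H2].
apply/eqP; rewrite eqn_leq -{1}s2 -{2}s1 (H1 _ h2 e2) (H2 _ h1 e1) //.
Qed.

Lemma ellP (G : group) (X : G -> Prop) x : Mon X x -> is_len X x (ell X x).
Proof.
move=> [w [hw ew]].
have [m [[w' [hw' [ew' sw']]] hm]] :=
  @min_ex (fun n => exists s : seq G, (forall y, List.In y s -> X y) /\ gprod s = x /\ size s = n) _
    (ex_intro _ w (conj hw (conj ew erefl))).
have ex : exists n, is_len X x n.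
  exists m; split; first by exists w'.
  move=> s hs es; apply: hm; exists s; auto.
exact: (epsilon_spec (inhabits 0) (is_len X x) ex).
Qed.

Lemma ell_le (G : group) (X : G -> Prop) x w :
  (forall y, List.In y w -> X y) -> gprod w = x -> ell X x <= size w.
Proof. move=> hw ew; have [_ H] := ellP (ex_intro _ w (conj hw ew)); exact: H. Qed.

Lemma ell_word (G : group) (X : G -> Prop) x : Mon X x ->
  exists w, (forall y, List.In y w -> X y) /\ gprod w = x /\ size w = ell X x.
Proof. by move=> /ellP []. Qed.

Lemma ell_one (G : group) (X : G -> Prop) : ell X (gone G) = 0.
Proof. by apply/eqP; rewrite -leqn0; apply: (@ell_le _ _ _ [::]). Qed.

Lemma Mon_one (G : group) (X : G -> Prop) : Mon X (gone G).
Proof. by exists [::]. Qed.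

Lemma ell0 (G : group) (X : G -> Prop) x : Mon X x -> ell X x = 0 -> x = gone G.
Proof. by move=> /ell_word [[|y w] [_ [<- <-]]]. Qed.

Lemma words_cat (G : group) (X : G -> Prop) (s : seq G) :
  (forall y, List.In y s -> Mon X y) ->
  exists w, (forall y, List.In y w -> X y) /\ gprod w = gprod s /\
            size w = sumn (map (ell X) s).
Proof.
elim: s => [|x s IH] hs; first by exists [::].
have [|w [hw [ew sw]]] := IH; first by move=> y hy; apply: hs; right.
have [wx [hx [ex sx]]] := ell_word (hs x (or_introl erefl)).
exists (wx ++ w); split; last by rewrite gprod_cat ex ew size_cat sx sw.
by move=> y /In_cat [] ?; auto.
Qed.

Lemma ell_sub (G : group) (X : G -> Prop) (s : seq G) :
  (forall y, List.In y s -> Mon X y) -> ell X (gprod s) <= sumn (map (ell X) s).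
Proof. by move=> /words_cat [w [hw [ew <-]]]; apply: ell_le. Qed.

Lemma Mon_prod (G : group) (X : G -> Prop) (s : seq G) :
  (forall y, List.In y s -> Mon X y) -> Mon X (gprod s).
Proof. by move=> /(words_cat (X:=X)) [w [hw [ew _]]]; exists w. Qed.

Lemma gprodZ (w : seq Zgroup) : (forall y, List.In y w -> Zgen y) -> gprod w = Posz (size w).
Proof.
elim: w => [|x w IH] h //=.
rewrite IH; last by move=> y hy; apply: h; right.
by rewrite (h x (or_introl erefl)) /= -addn1 PoszD GRing.addrC.
Qed.

Lemma gprod_Posz (s : seq nat) : gprod (map Posz s : seq Zgroup) = Posz (sumn s).
Proof. by elim: s => [|x s IH] //=; rewrite IH PoszD. Qed.

Lemma is_lenZ m : is_len Zgen (Posz m : Zgroup) m.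
Proof.
split.
  exists (nseq m (1%R : Zgroup)); split; last split.
  - by move=> y; elim: m => [|m IH] //= [<-|/IH].
  - by rewrite gprodZ ?size_nseq //; move=> y; elim: m => [|m IH] //= [<-|/IH].
  - by rewrite size_nseq.
by move=> s hs; rewrite gprodZ // => [[->]].
Qed.

Lemma ellZ m : ell Zgen (Posz m : Zgroup) = m.
Proof.
apply: (is_len_uniq (ellP _) (is_lenZ m)).
by have [[w [hw [ew _]]] _] := is_lenZ m; exists w.
Qed.

Lemma MonZ m : Mon Zgen (Posz m : Zgroup).
Proof. by have [[w [hw [ew _]]] _] := is_lenZ m; exists w. Qed.

Lemma MonZ_inv (a : Zgroup) : Mon Zgen a -> a = Posz `|a|%N.
Proof. by move=> [w [hw <-]]; rewrite gprodZ. Qed.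

Lemma Lmap_eq (G : group) (X : G -> Prop) s : Lmap X s = map Posz (map (ell X) s).
Proof. by rewrite /Lmap -map_comp. Qed.

Lemma nth_Lmap (G : group) (X : G -> Prop) s i : i < size s ->
  nth (gone Zgroup) (Lmap X s) i = Posz (ell X (nth (gone G) s i)).
Proof. by move=> h; rewrite /Lmap (nth_map (gone G)). Qed.

Lemma part1 (G : group) (X : G -> Prop) g s :
  LinFact X g s -> Comp_I (ell X g) (Lmap X s).
Proof.
move=> [h2 hM hne hsum hprod]; split.
- by rewrite size_map.
- by move=> y hy; have [x [_ ->]] := In_map hy; apply: MonZ.
- move=> i; rewrite size_map => hi.
  have hi' : i < size s by case/andP: hi => _ /leq_trans; apply; rewrite leq_pred.
  rewrite nth_Lmap // => -[] h0; apply: (hne i hi); apply: ell0 h0.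
  by apply: hM; apply: In_nth.
- by rewrite /Lmap -map_comp; under eq_map => x do rewrite /= ellZ; rewrite hsum ellZ.
- by rewrite Lmap_eq gprod_Posz hsum.
Qed.

Definition Inv (G : group) (X : G -> Prop) g (s : seq G) :=
  (forall y, List.In y s -> Mon X y) /\ gprod s = g /\ sumn (map (ell X) s) = ell X g.

Lemma merge_cat (G : group) (a b : seq G) x y :
  Defs.merge (size a) (a ++ x :: y :: b) = a ++ (x ** y) :: b.
Proof. elim: a => [|z a IH]; rewrite /Defs.merge /=; first by rewrite drop0. by move: IH; rewrite /Defs.merge /= => ->. Qed.

Lemma merge_split (G : group) i (t : seq G) : i.+1 < size t ->
  exists a x y b, t = a ++ x :: y :: b /\ size a = i.
Proof.
elim: t i => [|z t IH] [|i] //=.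
  by case: t IH => [|y b] //= _ _; exists [::], z, y, b.
move=> /IH [a [x [y [b [-> <-]]]]]; by exists (z :: a), x, y, b.
Qed.

Lemma merge_inv (G : group) (X : G -> Prop) g i (t : seq G) :
  Inv X g t -> i.+1 < size t ->
  Inv X g (Defs.merge i t) /\ Lmap X (Defs.merge i t) = Defs.merge i (Lmap X t).
Proof.
move=> hI /merge_split [a [x [y [b [et <-]]]]]; subst t; case: hI => hM [hp hs].
rewrite merge_cat.
have hMa z : List.In z a -> Mon X z by move=> hz; apply: hM; apply In_cat; auto.
have hMb z : List.In z b -> Mon X z by move=> hz; apply: hM; apply In_cat; right; right; right.
have hx : Mon X x by apply: hM; apply In_cat; right; left.
have hy : Mon X y by apply: hM; apply In_cat; right; right; left.
have hM' : forall z, List.In z (a ++ x ** y :: b) -> Mon X z.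
  move=> z /In_cat [/hMa //|[<-|/hMb //]].
  by have := @Mon_prod _ X [:: x; y]; rewrite /= gmul1_r; apply => w [<-|[<-|]].
have hp' : gprod (a ++ x ** y :: b) = g by rewrite -hp !gprod_cat /= -!gmulA.
have le1 := ell_sub hM'; rewrite hp' in le1.
have le2 : ell X (x ** y) <= ell X x + ell X y.
  have := @ell_sub _ X [:: x; y]; rewrite /= gmul1_r addn0; apply => w [<-|[<-|]] //.
move: hs le1; rewrite !map_cat !sumn_cat /= => hs le1.
have exy : ell X (x ** y) = ell X x + ell X y by lia.
split; first (split; [exact: hM' | split => //]); first by rewrite map_cat sumn_cat /=; lia.
rewrite /Lmap !map_cat /= -(size_map (fun x => (Posz (ell X x) : Zgroup))) merge_cat.
by rewrite exy PoszD.
Qed.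

Lemma part3_gen (G : group) (X : G -> Prop) g s t :
  fact_le s t -> Inv X g t -> Inv X g s /\ fact_le (Lmap X s) (Lmap X t).
Proof.
elim => {s t} [s t [i [hi ->]]|s|x y z _ IH1 _ IH2] ht.
- have [h1 h2] := merge_inv ht hi; split => //; apply: rt_step.
  by exists i; rewrite size_map h2.
- by split => //; apply: rt_refl.
- have [hy f2] := IH2 ht; have [hx f1] := IH1 hy; split => //; exact: rt_trans f1 f2.
Qed.

Lemma LinFact_Inv (G : group) (X : G -> Prop) g s : LinFact X g s -> Inv X g s.
Proof. by case. Qed.

Lemma map_le_eq A (f h : A -> nat) l : (forall x, List.In x l -> f x <= h x) ->
  sumn (map h l) <= sumn (map f l) -> map f l = map h l.
Proof.
elim: l => [|x l IH] //= hl hs.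
have hx := hl x (or_introl erefl).
have hl' : forall y, List.In y l -> f y <= h y by move=> y hy; apply: hl; right.
have le' : sumn (map f l) <= sumn (map h l).
  clear IH hs hl; elim: l hl' => [|y l IH'] //= H.
  apply: leq_add; [apply: H; left | apply: IH' => z hz; apply: H; right] => //.
have e : sumn (map h l) <= sumn (map f l) by lia.
rewrite (IH hl' e); congr (_ :: _); lia.
Qed.

Lemma c_abs (c : seq Zgroup) : (forall y, List.In y c -> Mon Zgen y) ->
  c = map Posz (map (fun a : int => absz a) c).
Proof.
elim: c => [|y c IH] //= h; rewrite -IH; last by move=> z hz; apply: h; right.
by rewrite -(MonZ_inv (h y (or_introl erefl))).
Qed.

Lemma part2 (G : group) (X : G -> Prop) g c : Mon X g ->
  Comp_I (ell X g) c -> exists s, LinFact X g s /\ Lmap X s = c.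
Proof.
move=> hg [h2 hM hne hsum hprod].
set ms := map (fun a : int => absz a) c.
have ec := c_abs hM; rewrite -/ms in ec.
have sms : sumn ms = ell X g by move: hprod; rewrite ec gprod_Posz => -[].
have [w [hw [ew sw]]] := ell_word hg.
set pieces := reshape ms w.
have shp : shape pieces = ms by rewrite reshapeKl // sw sms.
have flp : flatten pieces = w by rewrite reshapeKr // sw sms.
have hX : forall p y, List.In p pieces -> List.In y p -> X y.
  by move=> p y hp hy; apply: hw; rewrite -flp; apply: In_flatten hy hp.
set s := map (@gprod G) pieces.
have hMs : forall y, List.In y s -> Mon X y.
  move=> y hy; have [p [hp ->]] := In_map hy; exists p; split => //.
  by move=> z; apply: hX.
have gs : gprod s = g by rewrite -ew -flp gprod_flatten.
have le1 := ell_sub hMs; rewrite gs in le1.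
have emap : map (ell X \o @gprod G) pieces = map size pieces.
  apply: map_le_eq.
    move=> p hp /=; apply: ell_le => // y; exact: hX.
  by rewrite -map_comp in le1; move: le1; rewrite [sumn (map size _)](_ : _ = sumn (shape pieces)) // shp sms.
have hL : Lmap X s = c.
  by rewrite Lmap_eq /s -(map_comp (ell X)) emap ec -shp.
exists s; split => //; split.
- by move: h2; rewrite -hL size_map.
- exact: hMs.
- move=> i hi e; have := hne i; rewrite -hL size_map => /(_ hi).
  have hi' : i < size s by case/andP: hi => _ /leq_trans; apply; rewrite leq_pred.
  by rewrite nth_Lmap // e ell_one.
- by rewrite /s -map_comp emap -/(shape pieces) shp sms.
- exact: gs.
Qed.

Lemma ce_sym (G : group) (s t : seq G) : circ_equiv s t -> circ_equiv t s.
Proof. by move=> [e h]; split => // i; rewrite -e => hi; rewrite h. Qed.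

Lemma ce_trans (G : group) (s t u : seq G) :
  circ_equiv s t -> circ_equiv t u -> circ_equiv s u.
Proof.
move=> [e1 h1] [e2 h2]; split; first by rewrite e1.
by move=> i hi; rewrite h1 // h2 // -e1.
Qed.

Lemma ce_L (G : group) (X : G -> Prop) (s t : seq G) :
  circ_equiv s t -> circ_equiv (Lmap X s) (Lmap X t).
Proof.
move=> [e h]; split; first by rewrite !size_map.
move=> i; rewrite size_map => hi.
have hi' : i < size s by case/andP: hi => _ /leq_trans; apply; rewrite leq_pred.
by rewrite !nth_Lmap -?e // h.
Qed.

Lemma split2 (G : group) (s : seq G) : 2 <= size s ->
  exists xL mid xR, s = xL :: rcons mid xR.
Proof.
case: s => [|xL t] //=; case/lastP: t => [|mid xR] //= _.
by exists xL, mid, xR.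
Qed.

Lemma gprod_rcons (G : group) (s : seq G) x : gprod (rcons s x) = gprod s ** x.
Proof. by rewrite -cats1 gprod_cat /= gmul1_r. Qed.

Lemma In_rcons A (y : A) s x : List.In y (rcons s x) -> List.In y s \/ y = x.
Proof. by rewrite -cats1 => /In_cat [|[]]; auto. Qed.

Lemma gprod_conj (G : group) (g : G) w :
  gprod (map (fun x => g ** (x ** ginv g)) w) = g ** (gprod w ** ginv g).
Proof.
elim: w => [|x w IH] /=; first by rewrite gmul1 gmulV_r.
by rewrite IH -!gmulA gmulK.
Qed.

Lemma rep (G : group) (X : G -> Prop) g s : conj_closed X -> LinFact X g s ->
  exists s', LinFact X g s' /\ circ_equiv s s' /\ last (gone G) s' = gone G.
Proof.
move=> hX [h2 hM hne hsum hprod].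
have [xL [mid [xR es]]] := split2 h2; subst s.
have hxL : Mon X xL by apply: hM; left.
have hxR : Mon X xR by apply: hM; right; rewrite -cats1; apply In_cat; right; left.
have hmid : forall y, List.In y mid -> Mon X y.
  by move=> y hy; apply: hM; right; rewrite -cats1; apply In_cat; left.
set c := g ** (xR ** (ginv g ** xL)).
set s' := c :: rcons mid (gone G).
have [wL [hwL [ewL swL]]] := ell_word hxL.
have [wR [hwR [ewR swR]]] := ell_word hxR.
set W := map (fun x => g ** (x ** ginv g)) wR ++ wL.
have hW : forall y, List.In y W -> X y.
  move=> y /In_cat [hy|/hwL //]; have [x [hx ->]] := In_map hy.
  by have := hX x (ginv g) (hwR x hx); rewrite ginvK.
have eW : gprod W = c by rewrite gprod_cat gprod_conj ewR ewL /c -!gmulA.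
have hc : Mon X c by exists W.
have lec : ell X c <= ell X xR + ell X xL.
  by rewrite -swR -swL -(size_map (fun x => g ** (x ** ginv g))) -size_cat; apply: ell_le.
have ce : circ_equiv (xL :: rcons mid xR) s'.
  split; first by rewrite /= !size_rcons.
  move=> [|i] // hi; have hi' : i < size mid by move: hi; rewrite /= size_rcons; lia.
  by rewrite /= !nth_rcons hi'.
have hM' : forall y, List.In y s' -> Mon X y.
  move=> y [<-|hy] //; case: (In_rcons hy) => [/hmid //|->]; exact: Mon_one.
have gp : gprod s' = g.
  move: hprod; rewrite /s' /= !gprod_rcons gmul1_r /c -!gmulA => hp.
  set m := gprod mid in hp *.
  have : (ginv g ** (xL ** m)) ** xR = gone G by rewrite -!gmulA hp gmulV.
  by move/gswap => ->; rewrite gmul1_r.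
have le1 := ell_sub hM'; rewrite gp in le1.
exists s'; split; last split => //; last by rewrite /s' /= last_rcons.
split => //.
- by rewrite /s' /= size_rcons.
- move=> i hi; case: ce => e h.
  have hi2 : 0 < i < (size (xL :: rcons mid xR)).-1 by rewrite e.
  by rewrite -(h i hi2); apply: hne.
- move: hsum le1; rewrite /s' /= !map_rcons !sumn_rcons ell_one; lia.
Qed.

Lemma part7 (G : group) (X : G -> Prop) g s : conj_closed X -> LinFact X g s ->
  Lbar X g (qmap X g s) = qmap Zgen ((Posz (ell X g)) : Zgroup) (Lmap X s).
Proof.
move=> hX hs; apply: functional_extensionality => t.
apply: propositional_extensionality; split.
  move=> [s' [[hs' e1] [_ [ht e2]]]]; split => //.
  exact: ce_trans (ce_L X e1) e2.
move=> [ht e]; have [s' [hs' [e1 hl]]] := rep hX hs.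
exists s'; split; first by split.
split => //; split => //; exact: ce_trans (ce_sym (ce_L X e1)) e.
Qed.

Theorem proposition3p11 (G : group) (X : G -> Prop) (g : G) :
  conj_closed X -> generates X -> Mon X g ->
  (forall s, LinFact X g s -> Comp_I (ell X g) (Lmap X s)) /\
  (forall c, Comp_I (ell X g) c -> exists s, LinFact X g s /\ Lmap X s = c) /\
  (forall s t, LinFact X g s -> LinFact X g t -> fact_le s t ->
     fact_le (Lmap X s) (Lmap X t)) /\
  (forall C, CircFact X g C -> Comp_S (ell X g) (Lbar X g C)) /\
  (forall D, Comp_S (ell X g) D -> exists C, CircFact X g C /\ Lbar X g C = D) /\
  (forall C D, CircFact X g C -> CircFact X g D -> circ_le C D ->
     circ_le (Lbar X g C) (Lbar X g D)) /\
  (forall s, LinFact X g s ->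
     Lbar X g (qmap X g s) = qmap Zgen ((Posz (ell X g)) : Zgroup) (Lmap X s)).
Proof.
move=> hX _ hg.
split; first exact: part1.
split; first by move=> c; apply: part2.
split.
  by move=> s t _ ht hf; case: (part3_gen hf (LinFact_Inv ht)).
split.
  move=> C [s [hs ->]]; exists (Lmap X s); split; first exact: part1.
  exact: part7.
split.
  move=> D [c [hc ->]]; have [s [hs hL]] := part2 hg hc.
  exists (qmap X g s); split; first by exists s.
  by rewrite part7 // hL.
split; last by move=> s; apply: part7.
move=> C D [s0 [hs0 ->]] [t0 [ht0 ->]] [s [t [[hs e1] [[ht e2] hf]]]].
rewrite !part7 //; exists (Lmap X s), (Lmap X t); split; last split.
- by split; [apply: part1 | apply: ce_L].
- by split; [apply: part1 | apply: ce_L].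
- by case: (part3_gen hf (LinFact_Inv ht)).
Qed.
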